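(* Let $S=s_1,\ldots,s_n$ be a sequence of nonnegative integers, $\gamma>0$ and $k$ a positive integer. Let $(L,\alpha,\beta)$ be an optimal solution of $\textsc{Geo}$ for $S,\gamma,k$, with $L=\ell_1,\ldots,\ell_n$. If there is an index $j$ with $s_j\ell_j\ne0$, then $\alpha\ge\frac{1}{1+nk}$.
   Context: A level sequence is $L=\ell_1,\ldots,\ell_n$ of integers with $0\le\ell_i\le k$; set $\ell_0=0$. The penalty is $\mathrm{pen}(x,y)=\max(y-x,0)\,\gamma\log n$. The geometric distribution is $p_{\mathrm{geo}}(s;\lambda)=(1-\lambda)\lambda^s$ (with $0^0=1$). For $0\le\alpha<1$, $0<\beta<1$: $\mathrm{score}_{\mathrm{geo}}(L,S;\alpha,\beta,\gamma)=\sum_{i=1}^n\big[-\log p_{\mathrm{geo}}(s_i;\beta\alpha^{\ell_i})+\mathrm{pen}(\ell_{i-1},\ell_i)\big]$. Problem $\textsc{Geo}$: given $S,\gamma,k$, find $L$, $\alpha$ and $\beta$ minimizing this score. *)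

(* Defs.v *)
(* concrete reals R, with Coquelicot's extended reals Rbar
   to represent the value +infinity of -log 0. *)
From Stdlib Require Import Reals.
From Coquelicot Require Import Coquelicot.
Open Scope R_scope.

(* -log p_geo(s; lam), where p_geo(s;lam) = (1-lam) lam^s (pow 0 0 = 1).
   Equals +oo when the probability is 0 (lam = 0, s > 0). *)
Definition neglog_geo (s : nat) (lam : R) : Rbar :=
  let p := (1 - lam) * lam ^ s in
  if Rlt_dec 0 p then Finite (- ln p) else p_infty.

Definition pen (n : nat) (gamma : R) (x y : nat) : R :=
  Rmax (INR y - INR x) 0 * gamma * ln (INR n).

(* Sequences are indexed 1..n; the level before index 1 is l_0 = 0. *)
Definition prev_level (L : nat -> nat) (i : nat) : nat :=
  match i with O => O | S O => O | S j => L j end.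

Definition term_geo (n : nat) (S L : nat -> nat) (alpha beta gamma : R) (i : nat) : Rbar :=
  Rbar_plus (neglog_geo (S i) (beta * alpha ^ (L i)))
            (Finite (pen n gamma (prev_level L i) (L i))).

Fixpoint score_upto (n : nat) (S L : nat -> nat) (alpha beta gamma : R) (m : nat) : Rbar :=
  match m with
  | O => Finite 0
  | Datatypes.S m' => Rbar_plus (score_upto n S L alpha beta gamma m')
                                (term_geo n S L alpha beta gamma m)
  end.

Definition score_geo (n : nat) (S L : nat -> nat) (alpha beta gamma : R) : Rbar :=
  score_upto n S L alpha beta gamma n.

Definition level_seq (n k : nat) (L : nat -> nat) : Prop :=
  forall i, (1 <= i <= n)%nat -> (L i <= k)%nat.

Definition feasible_geo (n k : nat) (L : nat -> nat) (alpha beta : R) : Prop :=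
  level_seq n k L /\ 0 <= alpha < 1 /\ 0 < beta < 1.

Definition optimal_geo (n : nat) (S : nat -> nat) (gamma : R) (k : nat)
  (L : nat -> nat) (alpha beta : R) : Prop :=
  feasible_geo n k L alpha beta /\
  forall L' alpha' beta', feasible_geo n k L' alpha' beta' ->
    Rbar_le (score_geo n S L alpha beta gamma) (score_geo n S L' alpha' beta' gamma).

(* Main.v *)
Require Import Defs.
From Stdlib Require Import Reals.
From Coquelicot Require Import Coquelicot.
From Stdlib Require Import Lra Lia.
Open Scope R_scope.

Lemma ln_le_xm1 x : 0 < x -> ln x <= x - 1.
Proof.
  intros Hx. destruct (Rlt_or_le (x-1) (ln x)) as [H|H]; [|exact H].
  exfalso. apply exp_increasing in H. rewrite exp_ln in H by lra.
  pose proof (exp_ineq1_le (x-1)). lra.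
Qed.

Lemma ln_lt_xm1 x : 0 < x -> x <> 1 -> ln x < x - 1.
Proof.
  intros Hx H1. destruct (Rlt_or_le (ln x) (x-1)) as [H|H]; [exact H|].
  exfalso. assert (exp (x-1) <= x).
  { destruct (Rle_lt_or_eq_dec _ _ H) as [H'|H'].
    - apply exp_increasing in H'. rewrite exp_ln in H' by lra. lra.
    - rewrite H', exp_ln by lra. lra. }
  pose proof (exp_ineq1 (x-1) ltac:(lra)). lra.
Qed.

Lemma pow_le1 x n : 0 <= x <= 1 -> x ^ n <= 1.
Proof. intros H. rewrite <- (pow1 n). apply pow_incr. lra. Qed.

Lemma pow_diff_le a c l : 0 <= a <= c -> c <= 1 -> c ^ l - a ^ l <= INR l * (c - a).
Proof.
  intros Ha Hc. induction l as [|l IH].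
  - simpl. lra.
  - rewrite S_INR. simpl.
    assert (0 <= a ^ l <= 1) by (split; [apply pow_le; lra| apply pow_le1; lra]).
    assert (0 <= c ^ l - a ^ l) by (assert (a ^ l <= c ^ l) by (apply pow_incr; lra); lra).
    assert (c * (c ^ l - a ^ l) <= c ^ l - a ^ l).
    { rewrite <- (Rmult_1_l (c ^ l - a ^ l)) at 2. apply Rmult_le_compat_r; lra. }
    assert (a ^ l * (c - a) <= c - a).
    { rewrite <- (Rmult_1_l (c - a)) at 2. apply Rmult_le_compat_r; lra. }
    nra.
Qed.

Definition rt (n : nat) (S L : nat -> nat) (a beta gamma : R) (i : nat) : R :=
  - ln (1 - beta * a ^ L i) - INR (S i) * (ln beta + INR (L i) * ln a)
  + pen n gamma (prev_level L i) (L i).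

Fixpoint rs (n : nat) (S L : nat -> nat) (a beta gamma : R) (m : nat) : R :=
  match m with
  | O => 0
  | Datatypes.S m' => rs n S L a beta gamma m' + rt n S L a beta gamma m
  end.

Lemma term_fin n S L a beta gamma i : 0 < a < 1 -> 0 < beta < 1 ->
  term_geo n S L a beta gamma i = Finite (rt n S L a beta gamma i).
Proof.
  intros Ha Hb. unfold term_geo, neglog_geo, rt.
  assert (0 < a ^ L i <= 1) by (split; [apply pow_lt; lra| apply pow_le1; lra]).
  assert (0 < beta * a ^ L i) by (apply Rmult_lt_0_compat; lra).
  assert (beta * a ^ L i < 1) by nra.
  assert (0 < (beta * a ^ L i) ^ S i) by (apply pow_lt; lra).
  destruct (Rlt_dec 0 ((1 - beta * a ^ L i) * (beta * a ^ L i) ^ S i)) as [Hp|Hp].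
  - simpl. rewrite ln_mult by lra. rewrite ln_pow by lra.
    rewrite ln_mult by lra. rewrite ln_pow by lra. f_equal. ring.
  - exfalso. apply Hp. apply Rmult_lt_0_compat; lra.
Qed.

Lemma score_fin n S L a beta gamma m : 0 < a < 1 -> 0 < beta < 1 ->
  score_upto n S L a beta gamma m = Finite (rs n S L a beta gamma m).
Proof.
  intros Ha Hb. induction m as [|m IH]; simpl; [reflexivity|].
  rewrite IH, term_fin by assumption. reflexivity.
Qed.

Lemma key a c beta l k : 0 < a < c -> c < 1 -> 0 < beta < 1 -> (l <= k)%nat ->
  ln (1 - beta * a ^ l) - ln (1 - beta * c ^ l) <= INR k * (c - a) / (1 - c).
Proof.
  intros Ha Hc Hb Hl.
  assert (Hk : 0 <= INR k * (c - a) / (1 - c)).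
  { unfold Rdiv. apply Rmult_le_pos; [apply Rmult_le_pos; [apply pos_INR|lra]|].
    left; apply Rinv_0_lt_compat; lra. }
  destruct l as [|l].
  - simpl. lra.
  - set (u := 1 - beta * a ^ Datatypes.S l). set (v := 1 - beta * c ^ Datatypes.S l).
    assert (0 < a ^ Datatypes.S l) by (apply pow_lt; lra).
    assert (a ^ Datatypes.S l <= c ^ Datatypes.S l) by (apply pow_incr; lra).
    assert (Hcl : c ^ Datatypes.S l <= c).
    { simpl. assert (c ^ l <= 1) by (apply pow_le1; lra). nra. }
    assert (Hv : 1 - c <= v) by (unfold v; nra).
    assert (0 < u) by (unfold u; nra).
    assert (Hd := pow_diff_le a c (Datatypes.S l) ltac:(lra) ltac:(lra)).
    assert (INR (Datatypes.S l) <= INR k) by (apply le_INR; lia).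
    assert (Huv : u - v <= INR k * (c - a)) by (unfold u, v; nra).
    assert (ln u - ln v = ln (u / v)).
    { unfold Rdiv. rewrite ln_mult, ln_Rinv by (try apply Rinv_0_lt_compat; lra). ring. }
    rewrite H3.
    assert (ln (u / v) <= u / v - 1) by (apply ln_le_xm1; unfold Rdiv; apply Rmult_lt_0_compat; [lra|apply Rinv_0_lt_compat; lra]).
    assert (u / v - 1 = (u - v) / v) by (field; lra).
    assert ((u - v) / v <= INR k * (c - a) / (1 - c)).
    { unfold Rdiv. apply Rmult_le_compat.
      - unfold u, v; nra.
      - left; apply Rinv_0_lt_compat; lra.
      - exact Huv.
      - apply Rinv_le_contravar; lra. }
    lra.
Qed.

Theorem lemma6 (n : nat) (S : nat -> nat) (gamma : R) (k : nat)
  (L : nat -> nat) (alpha beta : R) :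
  0 < gamma -> (0 < k)%nat ->
  optimal_geo n S gamma k L alpha beta ->
  (exists j, (1 <= j <= n)%nat /\ (S j * L j <> 0)%nat) ->
  alpha >= / (1 + INR n * INR k).
Proof.
  intros Hg Hk [[Hlev [Ha Hb]] Hopt] [j [Hj HSL]].
  apply Rnot_lt_ge. intros Hlt.
  set (N := INR n * INR k) in *.
  assert (HN : 1 <= N).
  { unfold N. assert (1 <= INR n) by (apply (le_INR 1); lia).
    assert (1 <= INR k) by (apply (le_INR 1); lia). nra. }
  set (c := / (1 + N)) in *.
  assert (Hc0 : 0 < c) by (apply Rinv_0_lt_compat; lra).
  assert (Hc1 : c < 1).
  { unfold c. rewrite <- Rinv_1. apply Rinv_lt_contravar; lra. }
  assert (HSj : (1 <= S j)%nat) by (destruct (S j); simpl in HSL; lia).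
  assert (HLj : (1 <= L j)%nat) by (destruct (L j); [rewrite Nat.mul_0_r in HSL|]; lia).
  specialize (Hopt L c beta (conj Hlev (conj (conj (Rlt_le _ _ Hc0) Hc1) Hb))).
  unfold score_geo in Hopt.
  rewrite (score_fin n S L c beta gamma n) in Hopt by lra.
  destruct (Rle_lt_or_eq_dec _ _ (proj1 Ha)) as [Ha0|Ha0].
  - rewrite (score_fin n S L alpha beta gamma n) in Hopt by lra.
    simpl in Hopt.
    set (E := INR k * (c - alpha) / (1 - c)).
    set (Lam := ln c - ln alpha).
    assert (HLam : 0 < Lam) by (unfold Lam; pose proof (ln_increasing alpha c Ha0 Hlt); lra).
    assert (Hterm : forall i, (1 <= i <= n)%nat ->
      INR (S i * L i) * Lam <= rt n S L alpha beta gamma i - rt n S L c beta gamma i + E).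
    { intros i Hi. pose proof (key alpha c beta (L i) k ltac:(lra) Hc1 Hb (Hlev i Hi)).
      unfold rt. rewrite mult_INR. fold E in H. unfold Lam. lra. }
    assert (Hind : forall m, (m <= n)%nat ->
      0 <= rs n S L alpha beta gamma m - rs n S L c beta gamma m + INR m * E /\
      ((j <= m)%nat -> Lam <= rs n S L alpha beta gamma m - rs n S L c beta gamma m + INR m * E)).
    { induction m as [|m IH]; intros Hm.
      - simpl. split; [lra| intros; lia].
      - destruct (IH ltac:(lia)) as [IH1 IH2].
        pose proof (Hterm (Datatypes.S m) ltac:(lia)) as HT.
        assert (0 <= INR (S (Datatypes.S m) * L (Datatypes.S m)) * Lam)
          by (apply Rmult_le_pos; [apply pos_INR|lra]).
        rewrite S_INR. simpl rs. split; [lra|].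
        intros Hjm. destruct (Nat.eq_dec j (Datatypes.S m)) as [->|Hne].
        + assert (1 <= INR (S (Datatypes.S m) * L (Datatypes.S m))).
          { apply (le_INR 1). lia. }
          nra.
        + specialize (IH2 ltac:(lia)). lra. }
    destruct (Hind n (le_n n)) as [_ H2]. specialize (H2 ltac:(lia)).
    assert (HnE : INR n * E = (c - alpha) / c).
    { assert (H1c : 1 - c = N * c) by (unfold c; field; lra).
      assert (INR n <> 0) by (apply not_0_INR; lia).
      assert (INR k <> 0) by (apply not_0_INR; lia).
      unfold E. rewrite H1c. unfold N. field. repeat split; lra. }
    assert (ln (alpha / c) < alpha / c - 1).
    { apply ln_lt_xm1. unfold Rdiv. apply Rmult_lt_0_compat; [lra|apply Rinv_0_lt_compat; lra].
      intro Heq. assert (alpha = c) by (field_simplify_eq in Heq; lra). lra. }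
    assert (ln (alpha / c) = - Lam).
    { unfold Lam, Rdiv. rewrite ln_mult, ln_Rinv by (try apply Rinv_0_lt_compat; lra). ring. }
    assert (alpha / c - 1 = - ((c - alpha) / c)) by (field; lra).
    lra.
  -
    subst alpha.
    assert (Hnm : forall i, term_geo n S L 0 beta gamma i <> m_infty).
    { intros i. unfold term_geo, neglog_geo.
      destruct (Rlt_dec _ _); simpl; discriminate. }
    assert (Htj : term_geo n S L 0 beta gamma j = p_infty).
    { unfold term_geo, neglog_geo. rewrite pow_i by lia. rewrite Rmult_0_r.
      rewrite pow_i by lia. rewrite Rmult_0_r.
      destruct (Rlt_dec 0 0) as [H|H]; [lra|]. reflexivity. }
    assert (Hind : forall m, score_upto n S L 0 beta gamma m <> m_infty /\
       ((j <= m)%nat -> score_upto n S L 0 beta gamma m = p_infty)).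
    { induction m as [|m IH].
      - simpl. split; [discriminate| intros; lia].
      - destruct IH as [IH1 IH2]. simpl score_upto.
        pose proof (Hnm (Datatypes.S m)) as Hm.
        split.
        + destruct (score_upto n S L 0 beta gamma m), (term_geo n S L 0 beta gamma (Datatypes.S m));
            simpl; try discriminate; congruence.
        + intros Hjm. destruct (Nat.eq_dec j (Datatypes.S m)) as [<-|Hne].
          * rewrite Htj. destruct (score_upto n S L 0 beta gamma m); simpl; congruence.
          * rewrite IH2 by lia.
            destruct (term_geo n S L 0 beta gamma (Datatypes.S m)); simpl; congruence. }
    destruct (Hind n) as [_ H]. unfold score_geo in Hopt.
    rewrite H in Hopt by lia. simpl in Hopt. exact Hopt.
Qed.
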